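(* The sequent calculi $\mathbf{GCE}$, $\mathbf{GCM}$, $\mathbf{GCEN}$, $\mathbf{GCMN}$, $\mathbf{GCMC}$, $\mathbf{GCK}$ are sound and complete for the logics $\mathsf{CE}$, $\mathsf{CM}$, $\mathsf{CEN}$, $\mathsf{CMN}$, $\mathsf{CMC}$, $\mathsf{CK}$ respectively: for every formula $\phi$ of $\mathcal{L}_\triangleright$, the sequent $\Rightarrow\phi$ is derivable in the calculus iff $\phi$ belongs to the corresponding logic.
   Context: Formulas of $\mathcal{L}_\triangleright$ are built from atoms and $\bot$ with $\wedge,\vee,\to$ and binary $\triangleright$; $\top:=\bot\to\bot$. $\mathsf{CE}$ is the smallest set of $\mathcal{L}_\triangleright$-formulas containing all instances of classical tautologies and closed under modus ponens and the rule: from $\phi_0\leftrightarrow\phi_1$ and $\psi_0\leftrightarrow\psi_1$ infer $(\phi_0\triangleright\psi_0)\to(\phi_1\triangleright\psi_1)$. Axiom schemes: (CM) $(\phi\triangleright\psi\wedge\theta)\to(\phi\triangleright\psi)\wedge(\phi\triangleright\theta)$; (CC) $(\phi\triangleright\psi)\wedge(\phi\triangleright\theta)\to(\phi\triangleright\psi\wedge\theta)$; (CN) $\phi\triangleright\top$. $\mathsf{CEN}=\mathsf{CE}+(CN)$, $\mathsf{CM}=\mathsf{CE}+(CM)$, $\mathsf{CMN}=\mathsf{CM}+(CN)$, $\mathsf{CMC}=\mathsf{CM}+(CC)$, $\mathsf{CK}=\mathsf{CMC}+(CN)$ (adding all instances of the schemes as axioms). Sequents are $\Gamma\Rightarrow\Delta$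 with $\Gamma,\Delta$ finite multisets of formulas. $\mathbf{G3cp}$ has axioms $\Gamma,p\Rightarrow p,\Delta$ ($p$ atomic) and $\Gamma,\bot\Rightarrow\Delta$, and rules: $(L\wedge)$ from $\Gamma,\phi,\psi\Rightarrow\Delta$ infer $\Gamma,\phi\wedge\psi\Rightarrow\Delta$; $(R\wedge)$ from $\Gamma\Rightarrow\phi,\Delta$ and $\Gamma\Rightarrow\psi,\Delta$ infer $\Gamma\Rightarrow\phi\wedge\psi,\Delta$; $(L\vee)$ from $\Gamma,\phi\Rightarrow\Delta$ and $\Gamma,\psi\Rightarrow\Delta$ infer $\Gamma,\phi\vee\psi\Rightarrow\Delta$; $(R\vee)$ from $\Gamma\Rightarrow\phi,\psi,\Delta$ infer $\Gamma\Rightarrow\phi\vee\psi,\Delta$; $(L\to)$ from $\Gamma\Rightarrow\phi,\Delta$ and $\Gamma,\psi\Rightarrow\Delta$ infer $\Gamma,\phi\to\psi\Rightarrow\Delta$; $(R\to)$ from $\Gamma,\phi\Rightarrow\psi,\Delta$ infer $\Gamma\Rightarrow\phi\to\psi,\Delta$. $\mathbf{G3W}$ is $\mathbf{G3cp}$ plus weakening: from $\Gamma\Rightarrow\Delta$ infer $\Gamma,\phi\Rightarrow\Delta$, resp. $\Gamma\Rightarrow\phi,\Delta$. ''$\alpha\Leftrightarrow\beta$'' as a premise abbreviates the two premises $\alpha\Rightarrow\beta$, $\beta\Rightarrow\alpha$. Conditional rules: $(CE)$ from $\phi_0\Leftrightarrow\phi_1$ and $\psi_0\Leftrightarrow\psi_1$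 infer $\phi_1\triangleright\psi_1\Rightarrow\phi_0\triangleright\psi_0$; $(CM)$ from $\phi_0\Leftrightarrow\phi_1$ and $\psi_1\Rightarrow\psi_0$ infer $\phi_1\triangleright\psi_1\Rightarrow\phi_0\triangleright\psi_0$; $(CMC)$ for $n\ge1$, from $\phi_0\Leftrightarrow\phi_i$ ($1\le i\le n$) and $\psi_1,\dots,\psi_n\Rightarrow\psi_0$ infer $\phi_1\triangleright\psi_1,\dots,\phi_n\triangleright\psi_n\Rightarrow\phi_0\triangleright\psi_0$; $(CN)$ from $\Rightarrow\psi_0$ infer $\Rightarrow\phi_0\triangleright\psi_0$. $\mathbf{GCE},\mathbf{GCM},\mathbf{GCMC}$ are $\mathbf{G3W}$ plus $(CE)$, $(CM)$, $(CMC)$; $\mathbf{GCEN},\mathbf{GCMN},\mathbf{GCK}$ are these plus $(CN)$. The cut rule is not part of the calculi. *)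

(* Defs.v *)
From Stdlib Require Import List Permutation Bool.
Import ListNotations.

Inductive form : Type :=
| Atom : nat -> form
| Bot : form
| And : form -> form -> form
| Or : form -> form -> form
| Imp : form -> form -> form
| Cond : form -> form -> form.

Definition Top : form := Imp Bot Bot.
Definition Iff (a b : form) : form := And (Imp a b) (Imp b a).

(* Instances of classical tautologies: formulas true under every boolean
   valuation that treats atoms and conditional formulas as propositional
   variables. *)
Fixpoint eval (v : form -> bool) (f : form) : bool :=
  match f with
  | Atom _ => v f
  | Bot => false
  | And a b => eval v a && eval v b
  | Or a b => eval v a || eval v b
  | Imp a b => implb (eval v a) (eval v b)
  | Cond _ _ => v f
  end.

Definition taut_instance (f : form) : Prop := forall v, eval v f = true.

Inductive logic : Type := LCE | LCM | LCEN | LCMN | LCMC | LCK.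

Definition hasCM (L : logic) : Prop :=
  L = LCM \/ L = LCMN \/ L = LCMC \/ L = LCK.
Definition hasCC (L : logic) : Prop := L = LCMC \/ L = LCK.
Definition hasCN (L : logic) : Prop := L = LCEN \/ L = LCMN \/ L = LCK.

Inductive Thm (L : logic) : form -> Prop :=
| th_taut : forall f, taut_instance f -> Thm L f
| th_mp : forall a b, Thm L (Imp a b) -> Thm L a -> Thm L b
| th_re : forall a0 a1 b0 b1, Thm L (Iff a0 a1) -> Thm L (Iff b0 b1) ->
    Thm L (Imp (Cond a0 b0) (Cond a1 b1))
| th_CM : forall a b c, hasCM L ->
    Thm L (Imp (Cond a (And b c)) (And (Cond a b) (Cond a c)))
| th_CC : forall a b c, hasCC L ->
    Thm L (Imp (And (Cond a b) (Cond a c)) (Cond a (And b c)))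
| th_CN : forall a, hasCN L -> Thm L (Cond a Top).

Definition ruleCE (L : logic) : Prop := L = LCE \/ L = LCEN.
Definition ruleCM (L : logic) : Prop := L = LCM \/ L = LCMN.
Definition ruleCMC (L : logic) : Prop := L = LCMC \/ L = LCK.
Definition ruleCN (L : logic) : Prop := hasCN L.

(* Sequent calculi GCE, GCM, GCEN, GCMN, GCMC, GCK (cut-free, G3cp +
   weakening + conditional rules). Sequents are pairs of lists; the rule
   [g_perm] makes them multisets. *)
Inductive GD (L : logic) : list form -> list form -> Prop :=
| g_perm : forall G D G' D', GD L G D -> Permutation G G' -> Permutation D D' ->
    GD L G' D'
| g_ax : forall G D p, GD L (Atom p :: G) (Atom p :: D)
| g_bot : forall G D, GD L (Bot :: G) D
| g_Land : forall G D a b, GD L (a :: b :: G) D -> GD L (And a b :: G) D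
| g_Rand : forall G D a b, GD L G (a :: D) -> GD L G (b :: D) ->
    GD L G (And a b :: D)
| g_Lor : forall G D a b, GD L (a :: G) D -> GD L (b :: G) D ->
    GD L (Or a b :: G) D
| g_Ror : forall G D a b, GD L G (a :: b :: D) -> GD L G (Or a b :: D)
| g_Limp : forall G D a b, GD L G (a :: D) -> GD L (b :: G) D ->
    GD L (Imp a b :: G) D
| g_Rimp : forall G D a b, GD L (a :: G) (b :: D) -> GD L G (Imp a b :: D)
| g_WL : forall G D a, GD L G D -> GD L (a :: G) D
| g_WR : forall G D a, GD L G D -> GD L G (a :: D)
| g_CE : forall a0 a1 b0 b1, ruleCE L ->
    GD L [a0] [a1] -> GD L [a1] [a0] -> GD L [b0] [b1] -> GD L [b1] [b0] ->
    GD L [Cond a1 b1] [Cond a0 b0]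
| g_CM : forall a0 a1 b0 b1, ruleCM L ->
    GD L [a0] [a1] -> GD L [a1] [a0] -> GD L [b1] [b0] ->
    GD L [Cond a1 b1] [Cond a0 b0]
| g_CMC : forall (ps : list (form * form)) a0 b0, ruleCMC L ->
    ps <> [] ->
    (forall p, In p ps -> GD L [a0] [fst p]) ->
    (forall p, In p ps -> GD L [fst p] [a0]) ->
    GD L (map snd ps) [b0] ->
    GD L (map (fun p => Cond (fst p) (snd p)) ps) [Cond a0 b0]
| g_CN : forall a0 b0, ruleCN L -> GD L [] [b0] -> GD L [] [Cond a0 b0].

(* Main.v *)
Require Import Defs.
From Stdlib Require Import List Permutation Bool Arith Lia.
Import ListNotations.

Fixpoint conj (l : list form) : form := match l with [] => Top | x :: l => And x (conj l) end.
Fixpoint disj (l : list form) : form := match l with [] => Bot | x :: l => Or x (disj l) end.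
Definition Seq G D := Imp (conj G) (disj D).

Lemma eval_conj v l : eval v (conj l) = forallb (eval v) l.
Proof. induction l; simpl; auto. rewrite IHl; auto. Qed.
Lemma eval_disj v l : eval v (disj l) = existsb (eval v) l.
Proof. induction l; simpl; auto. rewrite IHl; auto. Qed.
Lemma eval_seq v G D : eval v (Seq G D) = implb (forallb (eval v) G) (existsb (eval v) D).
Proof. unfold Seq; simpl; rewrite eval_conj, eval_disj; auto. Qed.

Lemma forallb_perm {A} (f : A -> bool) l l' : Permutation l l' -> forallb f l = forallb f l'.
Proof. induction 1; simpl; auto; try congruence.
  destruct (f x), (f y); auto. Qed.
Lemma existsb_perm {A} (f : A -> bool) l l' : Permutation l l' -> existsb f l = existsb f l'.
Proof. induction 1; simpl; auto; try congruence.
  destruct (f x), (f y); auto. Qed.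

Section Snd.
Variable L : logic.

Lemma thm_sem1 X Y : (forall v, eval v X = true -> eval v Y = true) -> Thm L X -> Thm L Y.
Proof. intros H HX. apply th_mp with X; auto. apply th_taut. intro v; simpl.
  specialize (H v). destruct (eval v X); simpl; auto. Qed.
Lemma thm_sem2 X1 X2 Y : (forall v, eval v X1 = true -> eval v X2 = true -> eval v Y = true) ->
  Thm L X1 -> Thm L X2 -> Thm L Y.
Proof. intros H H1 H2. apply th_mp with X2; auto. apply th_mp with X1; auto.
  apply th_taut. intro v; simpl. specialize (H v).
  destruct (eval v X1), (eval v X2); simpl; auto. Qed.
Lemma thm_sem3 X1 X2 X3 Y : (forall v, eval v X1 = true -> eval v X2 = true -> eval v X3 = true -> eval v Y = true) ->
  Thm L X1 -> Thm L X2 -> Thm L X3 -> Thm L Y.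
Proof. intros H H1 H2 H3. apply th_mp with X3; auto. apply th_mp with X2; auto. apply th_mp with X1; auto.
  apply th_taut. intro v; simpl. specialize (H v).
  destruct (eval v X1), (eval v X2), (eval v X3); simpl; auto. Qed.

Ltac bdestr := intros; repeat match goal with H : _ = true |- _ => revert H end; simpl;
  repeat match goal with
  | |- context [eval ?v ?x] => destruct (eval v x)
  | |- context [forallb ?f ?x] => destruct (forallb f x)
  | |- context [existsb ?f ?x] => destruct (existsb f x)
  | |- context [?v (Cond ?a ?b)] => destruct (v (Cond a b))
  | |- context [?v (Atom ?a)] => destruct (v (Atom a))
  end; simpl; auto; try discriminate.

Lemma thm_re a a' b b' : Thm L (Imp a a') -> Thm L (Imp a' a) -> Thm L (Imp b b') -> Thm L (Imp b' b) ->
  Thm L (Imp (Cond a b) (Cond a' b')).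
Proof. intros. apply th_re; [apply thm_sem2 with (Imp a a') (Imp a' a)|apply thm_sem2 with (Imp b b') (Imp b' b)]; auto;
  intros v; simpl; bdestr. Qed.

Lemma thm_refl a : Thm L (Imp a a).
Proof. apply th_taut; intro v; simpl; bdestr. Qed.

Lemma thm_mono a a' b b' : hasCM L -> Thm L (Imp a a') -> Thm L (Imp a' a) -> Thm L (Imp b b') ->
  Thm L (Imp (Cond a b) (Cond a' b')).
Proof. intros HC H1 H2 H3.
  assert (R : Thm L (Imp (Cond a b) (Cond a' (And b' b)))).
  { apply thm_re; auto. apply thm_sem1 with (Imp b b'); auto; intro v; simpl; bdestr.
    apply th_taut; intro v; simpl; bdestr. }
  apply thm_sem2 with (2 := R) (3 := th_CM L a' b' b HC). intro v; simpl; bdestr. Qed.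

Lemma thm_cmc_aux a0 (ps : list (form*form)) : hasCC L -> ps <> [] ->
  (forall p, In p ps -> Thm L (Imp a0 (fst p))) -> (forall p, In p ps -> Thm L (Imp (fst p) a0)) ->
  Thm L (Imp (conj (map (fun p => Cond (fst p) (snd p)) ps)) (Cond a0 (conj (map snd ps)))).
Proof. intros HC. induction ps as [|p ps IH]; intros Hne H1 H2; [congruence|].
  destruct ps as [|q ps].
  - simpl. assert (R : Thm L (Imp (Cond (fst p) (snd p)) (Cond a0 (And (snd p) Top)))).
    { apply thm_re; auto with datatypes. apply th_taut; intro v; simpl; bdestr.
      apply th_taut; intro v; simpl; bdestr. }
    apply thm_sem1 with (2 := R); intro v; simpl; bdestr.
  - assert (IH' := IH ltac:(congruence) ltac:(auto with datatypes) ltac:(auto with datatypes)).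
    assert (R : Thm L (Imp (Cond (fst p) (snd p)) (Cond a0 (snd p)))).
    { apply thm_re; auto with datatypes; apply thm_refl. }
    assert (C := th_CC L a0 (snd p) (conj (map snd (q::ps))) HC).
    apply thm_sem3 with (2 := IH') (3 := R) (4 := C).
    intro v; remember (q::ps) as qs; simpl; bdestr. Qed.

Lemma sound G D : GD L G D -> Thm L (Seq G D).
Proof.
  induction 1.
  - apply thm_sem1 with (2 := IHGD); intro v; rewrite !eval_seq.
    rewrite (forallb_perm _ _ _ H0), (existsb_perm _ _ _ H1); auto.
  - apply th_taut; intro v; rewrite eval_seq; simpl; bdestr.
  - apply th_taut; intro v; rewrite eval_seq; simpl; bdestr.
  - apply thm_sem1 with (2 := IHGD); intro v; rewrite !eval_seq; simpl; bdestr.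
  - apply thm_sem2 with (2 := IHGD1) (3 := IHGD2); intro v; rewrite !eval_seq; simpl; bdestr.
  - apply thm_sem2 with (2 := IHGD1) (3 := IHGD2); intro v; rewrite !eval_seq; simpl; bdestr.
  - apply thm_sem1 with (2 := IHGD); intro v; rewrite !eval_seq; simpl; bdestr.
  - apply thm_sem2 with (2 := IHGD1) (3 := IHGD2); intro v; rewrite !eval_seq; simpl; bdestr.
  - apply thm_sem1 with (2 := IHGD); intro v; rewrite !eval_seq; simpl; bdestr.
  - apply thm_sem1 with (2 := IHGD); intro v; rewrite !eval_seq; simpl; bdestr.
  - apply thm_sem1 with (2 := IHGD); intro v; rewrite !eval_seq; simpl; bdestr.
  -
    assert (R : Thm L (Imp (Cond a1 b1) (Cond a0 b0))).
    { apply thm_re; [apply thm_sem1 with (2 := IHGD2)|apply thm_sem1 with (2 := IHGD1)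
        |apply thm_sem1 with (2 := IHGD4)|apply thm_sem1 with (2 := IHGD3)];
      intro v; unfold Seq; simpl; bdestr. }
    apply thm_sem1 with (2 := R); intro v; unfold Seq; simpl; bdestr.
  - assert (HC : hasCM L) by (unfold hasCM; destruct H as [H|H]; subst; auto).
    assert (R : Thm L (Imp (Cond a1 b1) (Cond a0 b0))).
    { apply thm_mono; auto; [apply thm_sem1 with (2 := IHGD2)|apply thm_sem1 with (2 := IHGD1)
        |apply thm_sem1 with (2 := IHGD3)];
      intro v; unfold Seq; simpl; bdestr. }
    apply thm_sem1 with (2 := R); intro v; unfold Seq; simpl; bdestr.
  - assert (HC : hasCM L) by (unfold hasCM; destruct H as [H|H]; subst; auto).
    assert (HC2 : hasCC L) by (unfold hasCC; destruct H as [H|H]; subst; auto).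
    assert (A := thm_cmc_aux a0 ps HC2 H0
      (fun p Hp => thm_sem1 (Seq [a0] [fst p]) (Imp a0 (fst p)) ltac:(intro v; unfold Seq; simpl; bdestr) (H2 p Hp))
      (fun p Hp => thm_sem1 (Seq [fst p] [a0]) (Imp (fst p) a0) ltac:(intro v; unfold Seq; simpl; bdestr) (H4 p Hp))).
    assert (M : Thm L (Imp (Cond a0 (conj (map snd ps))) (Cond a0 b0))).
    { apply thm_mono; auto; try apply thm_refl.
      apply thm_sem1 with (2 := IHGD); intro v; unfold Seq; simpl; rewrite eval_conj; bdestr. }
    apply thm_sem2 with (2 := A) (3 := M). intro v; unfold Seq; simpl; rewrite !eval_conj; bdestr.
  - assert (R : Thm L (Imp (Cond a0 Top) (Cond a0 b0))).
    { apply thm_re; try apply thm_refl.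
      apply thm_sem1 with (2 := IHGD); intro v; unfold Seq; simpl; bdestr.
      apply th_taut; intro v; simpl; bdestr. }
    apply thm_sem2 with (2 := R) (3 := th_CN L a0 H); intro v; unfold Seq; simpl; bdestr.
Qed.

Lemma soundness phi : GD L [] [phi] -> Thm L phi.
Proof. intro H. apply sound in H. apply thm_sem1 with (2 := H). intro v; unfold Seq; simpl; bdestr. Qed.
End Snd.

Definition cnd (p : form * form) := Cond (fst p) (snd p).

Inductive K (L : logic) : nat -> list form -> list form -> Prop :=
| k_ax : forall n G D p, In (Atom p) G -> In (Atom p) D -> K L n G D
| k_bot : forall n G D, In Bot G -> K L n G D
| k_Land : forall n G D a b, In (And a b) G -> K L n (a::b::G) D -> K L (S n) G D
| k_Rand : forall n G D a b, In (And a b) D -> K L n G (a::D) -> K L n G (b::D) -> K L (S n) G D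
| k_Lor : forall n G D a b, In (Or a b) G -> K L n (a::G) D -> K L n (b::G) D -> K L (S n) G D
| k_Ror : forall n G D a b, In (Or a b) D -> K L n G (a::b::D) -> K L (S n) G D
| k_Limp : forall n G D a b, In (Imp a b) G -> K L n G (a::D) -> K L n (b::G) D -> K L (S n) G D
| k_Rimp : forall n G D a b, In (Imp a b) D -> K L n (a::G) (b::D) -> K L (S n) G D
| k_CE : forall n G D a0 a1 b0 b1, ruleCE L -> In (Cond a1 b1) G -> In (Cond a0 b0) D ->
    K L n [a0] [a1] -> K L n [a1] [a0] -> K L n [b0] [b1] -> K L n [b1] [b0] -> K L (S n) G D
| k_CM : forall n G D a0 a1 b0 b1, ruleCM L -> In (Cond a1 b1) G -> In (Cond a0 b0) D ->
    K L n [a0] [a1] -> K L n [a1] [a0] -> K L n [b1] [b0] -> K L (S n) G D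
| k_CMC : forall n G D (ps : list (form*form)) a0 b0, ruleCMC L -> ps <> [] ->
    (forall p, In p ps -> In (cnd p) G) -> In (Cond a0 b0) D ->
    (forall p, In p ps -> K L n [a0] [fst p]) ->
    (forall p, In p ps -> K L n [fst p] [a0]) ->
    K L n (map snd ps) [b0] -> K L (S n) G D
| k_CN : forall n G D a0 b0, ruleCN L -> In (Cond a0 b0) D -> K L n [] [b0] -> K L (S n) G D.

Ltac incl_solve := unfold incl in *; let z := fresh "z" in let Hz := fresh "Hz" in intros z Hz;
  repeat match goal with H : forall _, In _ _ -> In _ _ |- _ =>
    match type of H with forall _, In _ ?l -> _ => 
      lazymatch goal with Hz' : context [In z l] |- _ => fail | _ => idtac end end;
    fail end;
  simpl in *; repeat rewrite in_app_iff in *;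
  firstorder (subst; auto; try discriminate; try congruence).

Section KL.
Variable L : logic.

Lemma K_mono n X D : K L n X D -> forall X' D', incl X X' -> incl D D' -> K L n X' D'.
Proof.
  induction 1; intros X' D' HX HD.
  - apply k_ax with p; auto.
  - apply k_bot; auto.
  - eapply k_Land; eauto. apply IHK; auto. apply incl_cons; [left; auto|]. apply incl_cons; [right; left; auto|].
    do 2 apply incl_tl; auto.
  - eapply k_Rand; eauto; [apply IHK1|apply IHK2]; auto; apply incl_cons; auto with datatypes; apply incl_tl; auto.
  - eapply k_Lor; eauto; [apply IHK1|apply IHK2]; auto; apply incl_cons; auto with datatypes; apply incl_tl; auto.
  - eapply k_Ror; eauto; apply IHK; auto. apply incl_cons; [left; auto|]. apply incl_cons; [right; left; auto|].
    do 2 apply incl_tl; auto.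
  - eapply k_Limp; eauto; [apply IHK1|apply IHK2]; auto; apply incl_cons; auto with datatypes; apply incl_tl; auto.
  - eapply k_Rimp; eauto; apply IHK; apply incl_cons; auto with datatypes; apply incl_tl; auto.
  - eapply k_CE; eauto.
  - eapply k_CM; eauto.
  - eapply k_CMC; eauto.
  - eapply k_CN; eauto.
Qed.

Lemma K_lift n X D : K L n X D -> forall m, n <= m -> K L m X D.
Proof.
  induction 1; intros m Hm; try (destruct m as [|m]; [lia|]).
  - eapply k_ax; eauto.
  - eapply k_bot; eauto.
  - eapply k_Land; eauto. apply IHK; lia.
  - eapply k_Rand; eauto; [apply IHK1|apply IHK2]; lia.
  - eapply k_Lor; eauto; [apply IHK1|apply IHK2]; lia.
  - eapply k_Ror; eauto; apply IHK; lia.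
  - eapply k_Limp; eauto; [apply IHK1|apply IHK2]; lia.
  - eapply k_Rimp; eauto; apply IHK; lia.
  - eapply k_CE; eauto; [apply IHK1|apply IHK2|apply IHK3|apply IHK4]; lia.
  - eapply k_CM; eauto; [apply IHK1|apply IHK2|apply IHK3]; lia.
  - eapply k_CMC; eauto; [intros; apply H4|intros; apply H6|apply IHK]; auto; lia.
  - eapply k_CN; eauto; apply IHK; lia.
Qed.
End KL.

Ltac mem := solve [ assumption
 | match goal with H : In ?t ?X, HX : forall z, In z ?X -> z = _ \/ In z ?Y |- In ?t ?Y =>
     let e := fresh in destruct (HX _ H) as [e|e]; [discriminate e|exact e] end
 | match goal with H : In ?t ?X, HX : incl ?X ?Y |- In ?t ?Y => exact (HX _ H) end ].

Ltac sc := unfold incl in *; simpl in *;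
 first [ assumption
       | solve [auto 6]
       | let z := fresh "z" in let Hz := fresh "Hz" in intros z Hz;
         repeat (destruct Hz as [Hz|Hz]; [subst; solve [auto 6] |]);
         first [ solve [auto 6]
               | match goal with HX : forall z, In z _ -> _ \/ _ |- _ =>
                   destruct (HX _ Hz); solve [subst; auto 6] end ] ].

Ltac ihp u w Xp Dp := match goal with
 | IH : forall _ _ _ _, _ |- _ => solve [eapply (IH u w); sc]
 end.

Ltac np u w := match goal with
 | H : In (Atom ?p) _ |- K _ _ _ _ => eapply (k_ax _ _ _ _ p); mem
 | H : In Bot _ |- K _ _ _ _ => eapply k_bot; mem
 | H : In (And ?a ?b) ?G, P : K _ ?n (?a :: ?b :: ?G) ?D |- K _ (S ?n) _ _ =>
     eapply (k_Land _ n _ _ a b); [mem|ihp u w (a::b::G) D]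
 | H : In (And ?a ?b) ?D, P : K _ ?n ?G (?a :: ?D), P' : K _ ?n ?G (?b :: ?D) |- K _ (S ?n) _ _ =>
     eapply (k_Rand _ n _ _ a b); [mem|ihp u w G (a::D)|ihp u w G (b::D)]
 | H : In (Or ?a ?b) ?G, P : K _ ?n (?a :: ?G) ?D, P' : K _ ?n (?b :: ?G) ?D |- K _ (S ?n) _ _ =>
     eapply (k_Lor _ n _ _ a b); [mem|ihp u w (a::G) D|ihp u w (b::G) D]
 | H : In (Or ?a ?b) ?D, P : K _ ?n ?G (?a :: ?b :: ?D) |- K _ (S ?n) _ _ =>
     eapply (k_Ror _ n _ _ a b); [mem|ihp u w G (a::b::D)]
 | H : In (Imp ?a ?b) ?G, P : K _ ?n ?G (?a :: ?D), P' : K _ ?n (?b :: ?G) ?D |- K _ (S ?n) _ _ =>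
     eapply (k_Limp _ n _ _ a b); [mem|ihp u w G (a::D)|ihp u w (b::G) D]
 | H : In (Imp ?a ?b) ?D, P : K _ ?n (?a :: ?G) (?b :: ?D) |- K _ (S ?n) _ _ =>
     eapply (k_Rimp _ n _ _ a b); [mem|ihp u w (a::G) (b::D)]
 | HR : ruleCE _, H1 : In (Cond ?a1 ?b1) _, H2 : In (Cond ?a0 ?b0) _, P1 : K _ ?n [?a0] [?a1],
   P4 : K _ ?n [?b1] [?b0], P3 : K _ ?n [?b0] [?b1] |- K _ (S ?n) _ _ =>
     eapply (k_CE _ n _ _ a0 a1 b0 b1); [exact HR|mem|mem|eassumption..]
 | HR : ruleCM _, H1 : In (Cond ?a1 ?b1) _, H2 : In (Cond ?a0 ?b0) _, P1 : K _ ?n [?a0] [?a1],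
   P4 : K _ ?n [?b1] [?b0] |- K _ (S ?n) _ _ =>
     eapply (k_CM _ n _ _ a0 a1 b0 b1); [exact HR|mem|mem|eassumption..]
 | HR : ruleCMC _, Hne : ?ps <> [], Hall : forall p, In p ?ps -> In (cnd p) _,
   H : In (Cond ?a0 ?b0) _, P : K _ ?n (map snd ?ps) [?b0] |- K _ (S ?n) _ _ =>
     eapply (k_CMC _ n _ _ ps a0 b0); [exact HR|exact Hne| let p := fresh in let Hp := fresh in
       intros p Hp; specialize (Hall p Hp); mem |mem|eassumption..]
 | HR : ruleCN _, H : In (Cond ?a0 ?b0) _, P : K _ ?n [] [?b0] |- K _ (S ?n) _ _ =>
     eapply (k_CN _ n _ _ a0 b0); [exact HR|mem|eassumption]
 end.

Section Inv.
Variable L : logic.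

Ltac pc u w Y E := match goal with
  | H : In ?f _, HX : forall z, In z _ -> z = ?F \/ _ |- _ =>
    let e := fresh in destruct (HX _ H) as [e|e];
    [injection e; intros; subst;
     match goal with IH : forall _ _ _ _, _ |- _ => solve [eapply K_lift; [eapply (IH u w Y E); sc|lia]] end
    | np u w]
  end.

Lemma inv_Land n X D (HK : K L n X D) : forall u w Y E, (forall z, In z X -> z = And u w \/ In z Y) ->
  incl D E -> In u Y -> In w Y -> K L n Y E.
Proof. induction HK; intros u w Y E HX HD S1 S2; try np u w. pc u w Y E. Qed.

Lemma inv_Lor_l n X D (HK : K L n X D) : forall u w Y E, (forall z, In z X -> z = Or u w \/ In z Y) ->
  incl D E -> In u Y -> K L n Y E.
Proof. induction HK; intros u w Y E HX HD S1; try np u w. pc u w Y E. Qed.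

Lemma inv_Lor_r n X D (HK : K L n X D) : forall u w Y E, (forall z, In z X -> z = Or u w \/ In z Y) ->
  incl D E -> In w Y -> K L n Y E.
Proof. induction HK; intros u w Y E HX HD S1; try np u w. pc u w Y E. Qed.

Lemma inv_Limp_l n X D (HK : K L n X D) : forall u w Y E, (forall z, In z X -> z = Imp u w \/ In z Y) ->
  incl D E -> In u E -> K L n Y E.
Proof. induction HK; intros u w Y E HX HD S1; try np u w. pc u w Y E. Qed.

Lemma inv_Limp_r n X D (HK : K L n X D) : forall u w Y E, (forall z, In z X -> z = Imp u w \/ In z Y) ->
  incl D E -> In w Y -> K L n Y E.
Proof. induction HK; intros u w Y E HX HD S1; try np u w. pc u w Y E. Qed.

Lemma inv_Rand_l n X D (HK : K L n X D) : forall u w Y E, incl X Y -> (forall z, In z D -> z = And u w \/ In z E) ->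
  In u E -> K L n Y E.
Proof. induction HK; intros u w Y E HD HX S1; try np u w. pc u w Y E. Qed.

Lemma inv_Rand_r n X D (HK : K L n X D) : forall u w Y E, incl X Y -> (forall z, In z D -> z = And u w \/ In z E) ->
  In w E -> K L n Y E.
Proof. induction HK; intros u w Y E HD HX S1; try np u w. pc u w Y E. Qed.

Lemma inv_Ror n X D (HK : K L n X D) : forall u w Y E, incl X Y -> (forall z, In z D -> z = Or u w \/ In z E) ->
  In u E -> In w E -> K L n Y E.
Proof. induction HK; intros u w Y E HD HX S1 S2; try np u w. pc u w Y E. Qed.

Lemma inv_Rimp n X D (HK : K L n X D) : forall u w Y E, incl X Y -> (forall z, In z D -> z = Imp u w \/ In z E) ->
  In u Y -> In w E -> K L n Y E.
Proof. induction HK; intros u w Y E HD HX S1 S2; try np u w. pc u w Y E. Qed.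

End Inv.

Section Cut.
Variable L : logic.
Definition Kd G D := exists n, K L n G D.

Lemma kd_mono G D G' D' : Kd G D -> incl G G' -> incl D D' -> Kd G' D'.
Proof. intros [n H] ? ?; exists n; eapply K_mono; eauto. Qed.

Lemma kd_ax G D p : In (Atom p) G -> In (Atom p) D -> Kd G D.
Proof. exists 0; eapply k_ax; eauto. Qed.
Lemma kd_bot G D : In Bot G -> Kd G D.
Proof. exists 0; eapply k_bot; eauto. Qed.

Ltac lft := match goal with H: K _ ?k ?X ?Y |- K _ _ ?X ?Y => apply K_lift with k; [exact H|lia] end.
Ltac kd2 := match goal with H1 : Kd _ _, H2 : Kd _ _ |- _ =>
  destruct H1 as [n1 H1]; destruct H2 as [n2 H2]; exists (S (max n1 n2));
  apply K_lift with (m := max n1 n2) in H1; [|lia]; apply K_lift with (m := max n1 n2) in H2; [|lia] end.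

Lemma kd_Land G D a b : In (And a b) G -> Kd (a::b::G) D -> Kd G D.
Proof. intros ? [n H]; exists (S n); eapply k_Land; eauto. Qed.
Lemma kd_Rand G D a b : In (And a b) D -> Kd G (a::D) -> Kd G (b::D) -> Kd G D.
Proof. intros ? ? ?; kd2; eapply k_Rand; eauto. Qed.
Lemma kd_Lor G D a b : In (Or a b) G -> Kd (a::G) D -> Kd (b::G) D -> Kd G D.
Proof. intros ? ? ?; kd2; eapply k_Lor; eauto. Qed.
Lemma kd_Ror G D a b : In (Or a b) D -> Kd G (a::b::D) -> Kd G D.
Proof. intros ? [n H]; exists (S n); eapply k_Ror; eauto. Qed.
Lemma kd_Limp G D a b : In (Imp a b) G -> Kd G (a::D) -> Kd (b::G) D -> Kd G D.
Proof. intros ? ? ?; kd2; eapply k_Limp; eauto. Qed.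
Lemma kd_Rimp G D a b : In (Imp a b) D -> Kd (a::G) (b::D) -> Kd G D.
Proof. intros ? [n H]; exists (S n); eapply k_Rimp; eauto. Qed.
Lemma kd_CE G D a0 a1 b0 b1 : ruleCE L -> In (Cond a1 b1) G -> In (Cond a0 b0) D ->
  Kd [a0] [a1] -> Kd [a1] [a0] -> Kd [b0] [b1] -> Kd [b1] [b0] -> Kd G D.
Proof. intros ? ? ? [n1 H1] [n2 H2] [n3 H3] [n4 H4]. exists (S (n1+n2+n3+n4)).
  eapply k_CE; eauto; lft. Qed.
Lemma kd_CM G D a0 a1 b0 b1 : ruleCM L -> In (Cond a1 b1) G -> In (Cond a0 b0) D ->
  Kd [a0] [a1] -> Kd [a1] [a0] -> Kd [b1] [b0] -> Kd G D.
Proof. intros ? ? ? [n1 H1] [n2 H2] [n3 H3]. exists (S (n1+n2+n3)).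
  eapply k_CM; eauto; lft. Qed.
Lemma kd_CN G D a0 b0 : ruleCN L -> In (Cond a0 b0) D -> Kd [] [b0] -> Kd G D.
Proof. intros ? ? [n H]; exists (S n); eapply k_CN; eauto. Qed.

Lemma uniform (ps : list (form*form)) (P : nat -> form*form -> Prop) :
  (forall n m p, n <= m -> P n p -> P m p) -> (forall p, In p ps -> exists n, P n p) ->
  exists n, forall p, In p ps -> P n p.
Proof. intros Hm. induction ps as [|q ps IH]; intros H.
  - exists 0; intros p [].
  - destruct (H q (or_introl eq_refl)) as [n1 H1]. destruct IH as [n2 H2]; [intros; apply H; right; auto|].
    exists (max n1 n2); intros p [<-|Hp]; [apply Hm with n1; [lia|auto]|apply Hm with n2; [lia|auto]]. Qed.

Lemma kd_CMC G D ps a0 b0 : ruleCMC L -> ps <> [] -> (forall p, In p ps -> In (cnd p) G) -> In (Cond a0 b0) D ->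
  (forall p, In p ps -> Kd [a0] [fst p]) -> (forall p, In p ps -> Kd [fst p] [a0]) ->
  Kd (map snd ps) [b0] -> Kd G D.
Proof. intros ? ? ? ? H1 H2 [n3 H3].
  destruct (uniform ps (fun n p => K L n [a0] [fst p] /\ K L n [fst p] [a0])) as [n HH].
  { intros n m p Hnm [? ?]; split; eapply K_lift; eauto. }
  { intros p Hp. destruct (H1 p Hp) as [m1 ?]; destruct (H2 p Hp) as [m2 ?]. exists (max m1 m2); split;
    eapply K_lift; eauto; lia. }
  exists (S (max n n3)). eapply k_CMC; eauto.
  - intros p Hp; eapply K_lift; [apply HH; auto| lia].
  - intros p Hp; eapply K_lift; [apply HH; auto| lia].
  - lft.
Qed.

Lemma K_Kd n G D : K L n G D -> Kd G D.
Proof. intros; exists n; auto. Qed.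

Lemma ident A : forall G D, In A G -> In A D -> Kd G D.
Proof.
  induction A; intros G D HG HD.
  - eapply kd_ax; eauto.
  - eapply kd_bot; eauto.
  - apply kd_Land with A1 A2; auto. apply kd_Rand with A1 A2; [auto|apply IHA1|apply IHA2]; simpl; auto.
  - apply kd_Lor with A1 A2; auto; (apply kd_Ror with A1 A2; [auto|]); [apply IHA1|apply IHA2]; simpl; auto.
  - apply kd_Rimp with A1 A2; auto. apply kd_Limp with A1 A2; [simpl; auto| apply IHA1 | apply IHA2]; simpl; auto.
  - assert (I1 : Kd [A1] [A1]) by (apply IHA1; simpl; auto).
    assert (I2 : Kd [A2] [A2]) by (apply IHA2; simpl; auto).
    destruct L eqn:EL.
    + apply kd_CE with (a0:=A1)(a1:=A1)(b0:=A2)(b1:=A2); auto; left; auto.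
    + apply kd_CM with (a0:=A1)(a1:=A1)(b0:=A2)(b1:=A2); auto; left; auto.
    + apply kd_CE with (a0:=A1)(a1:=A1)(b0:=A2)(b1:=A2); auto; right; auto.
    + apply kd_CM with (a0:=A1)(a1:=A1)(b0:=A2)(b1:=A2); auto; right; auto.
    + apply kd_CMC with (ps := [(A1, A2)]) (a0:=A1) (b0:=A2); auto; [left; auto|congruence|intros p [<-|[]]; auto
        |intros p [<-|[]]; auto|intros p [<-|[]]; auto].
    + apply kd_CMC with (ps := [(A1, A2)]) (a0:=A1) (b0:=A2); auto; [right; auto|congruence|intros p [<-|[]]; auto
        |intros p [<-|[]]; auto|intros p [<-|[]]; auto].
Qed.
End Cut.

Definition form_eq_dec : forall x y : form, {x = y} + {x <> y}.
Proof. decide equality; apply Nat.eq_dec. Defined.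
Definition pf_eq_dec : forall x y : form * form, {x = y} + {x <> y}.
Proof. decide equality; apply form_eq_dec. Defined.

Ltac rulecontra := unfold ruleCE, ruleCM, ruleCMC, ruleCN, hasCN in *; intuition congruence.

Section Cut2.
Variable L : logic.
Notation Kd := (Kd L).

Definition cut_for A := forall G D, Kd G (A::D) -> Kd (A::G) D -> Kd G D.

Lemma trans a (Ca : cut_for a) p q : Kd [p] [a] -> Kd [a] [q] -> Kd [p] [q].
Proof. intros H1 H2. apply Ca; [apply kd_mono with [p] [a]| apply kd_mono with [a] [q]]; auto; intros z; simpl; tauto. Qed.

Definition CondLeft a b G :=
 (ruleCE L /\ exists a1 b1, In (Cond a1 b1) G /\ Kd [a] [a1] /\ Kd [a1] [a] /\ Kd [b] [b1] /\ Kd [b1] [b])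
 \/ (ruleCM L /\ exists a1 b1, In (Cond a1 b1) G /\ Kd [a] [a1] /\ Kd [a1] [a] /\ Kd [b1] [b])
 \/ (ruleCMC L /\ exists qs, qs <> [] /\ (forall q, In q qs -> In (cnd q) G) /\
      (forall q, In q qs -> Kd [a] [fst q]) /\ (forall q, In q qs -> Kd [fst q] [a]) /\ Kd (map snd qs) [b])
 \/ (ruleCN L /\ Kd [] [b]).

Lemma CondLeft_mono a b G G' : CondLeft a b G -> incl G G' -> CondLeft a b G'.
Proof. intros H HG. unfold CondLeft in *.
  destruct H as [[? [x [y [? ?]]]]|[[? [x [y [? ?]]]]|[[? [qs [? [? ?]]]]|?]]].
  - left; split; auto; exists x, y; auto.
  - right; left; split; auto; exists x, y; auto.
  - right; right; left; split; auto; exists qs; split; auto.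
  - right; right; right; auto.
Qed.

Definition filt a b (ps : list (form*form)) := filter (fun p => if pf_eq_dec p (a,b) then false else true) ps.
Lemma filt_In a b ps p : In p (filt a b ps) <-> In p ps /\ p <> (a,b).
Proof. unfold filt; rewrite filter_In. destruct (pf_eq_dec p (a,b)); intuition congruence. Qed.

Lemma cmc_princ a b (Ca : cut_for a) (Cb : cut_for b) ps a0 b0 G0 D0 :
 ruleCMC L -> In (Cond a0 b0) D0 -> In (a,b) ps -> (forall p, In p ps -> p <> (a,b) -> In (cnd p) G0) ->
 (forall p, In p ps -> Kd [a0] [fst p]) -> (forall p, In p ps -> Kd [fst p] [a0]) -> Kd (map snd ps) [b0] ->
 CondLeft a b G0 -> Kd G0 D0.
Proof.
  intros HR HD Hab Hall P1 P2 P3 HC.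
  destruct HC as [[? _]|[[? _]|[[_ [qs [Hne [Hq [Q1 [Q2 Q3]]]]]]|[HN Q]]]]; try rulecontra.
  - apply kd_CMC with (ps := filt a b ps ++ qs) (a0 := a0) (b0 := b0); auto.
    + destruct qs; [congruence|]. destruct (filt a b ps); discriminate.
    + intros p Hp; apply in_app_or in Hp; destruct Hp as [Hp|Hp]; [apply filt_In in Hp; apply Hall; tauto|auto].
    + intros p Hp; apply in_app_or in Hp; destruct Hp as [Hp|Hp]; [apply filt_In in Hp; apply P1; tauto|].
      apply trans with a; auto. apply (P1 _ Hab).
    + intros p Hp; apply in_app_or in Hp; destruct Hp as [Hp|Hp]; [apply filt_In in Hp; apply P2; tauto|].
      apply trans with a; auto. apply (P2 _ Hab).
    + apply Cb.
      * eapply kd_mono; [exact Q3| |]; intros z Hz; [|simpl in *; tauto].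
        rewrite map_app; apply in_or_app; right; auto.
      * eapply kd_mono; [exact P3| |]; [|intros z Hz; auto].
        intros z Hz. apply in_map_iff in Hz. destruct Hz as [p [<- Hp]].
        destruct (pf_eq_dec p (a,b)) as [->|Hne']; [left; auto|right].
        rewrite map_app; apply in_or_app; left. apply in_map. apply filt_In; auto.
  - destruct (filt a b ps) as [|p0 ps0] eqn:EF.
    + apply kd_CN with a0 b0; auto. apply Cb.
      * eapply kd_mono; [exact Q| |]; intros z Hz; simpl in *; tauto.
      * eapply kd_mono; [exact P3| |]; [|intros z Hz; auto].
        intros z Hz. apply in_map_iff in Hz. destruct Hz as [p [<- Hp]].
        destruct (pf_eq_dec p (a,b)) as [->|Hne']; [left; auto|].
        assert (In p (filt a b ps)) by (apply filt_In; auto). rewrite EF in H; destruct H.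
    + apply kd_CMC with (ps := filt a b ps) (a0 := a0) (b0 := b0); auto.
      * rewrite EF; discriminate.
      * intros p Hp; apply filt_In in Hp; apply Hall; tauto.
      * intros p Hp; apply filt_In in Hp; apply P1; tauto.
      * intros p Hp; apply filt_In in Hp; apply P2; tauto.
      * apply Cb.
        -- eapply kd_mono; [exact Q| |]; intros z Hz; simpl in *; tauto.
        -- eapply kd_mono; [exact P3| |]; [|intros z Hz; auto].
           intros z Hz. apply in_map_iff in Hz. destruct Hz as [p [<- Hp]].
           destruct (pf_eq_dec p (a,b)) as [->|Hne']; [left; auto|right].
           apply in_map. apply filt_In; auto.
Qed.
End Cut2.

Ltac memc := solve [ assumption
  | match goal with H: In ?t ?X, HY: incl ?X (_ :: ?G) |- In ?t ?G =>
      let e := fresh in destruct (HY _ H) as [e|e]; [discriminate e|exact e] end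
  | match goal with H : In ?t ?X, HE : incl ?X ?D |- In ?t ?D => exact (HE _ H) end ].

Ltac ihc := match goal with IH : forall _ _, incl _ _ -> _ |- _ =>
   solve [eapply IH; [sc | sc | eapply CondLeft_mono; [eassumption| sc]]] end.

Ltac npc := match goal with
 | H : In (Atom ?p) _ |- _ => apply kd_ax with p; memc
 | H : In Bot _ |- _ => apply kd_bot; memc
 | H : In (And ?a ?b) ?G, P : K _ ?n (?a :: ?b :: ?G) ?D |- _ =>
     apply kd_Land with a b; [memc|ihc]
 | H : In (And ?a ?b) ?D, P : K _ ?n ?G (?a :: ?D), P' : K _ ?n ?G (?b :: ?D) |- _ =>
     apply kd_Rand with a b; [memc|ihc|ihc]
 | H : In (Or ?a ?b) ?G, P : K _ ?n (?a :: ?G) ?D, P' : K _ ?n (?b :: ?G) ?D |- _ =>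
     apply kd_Lor with a b; [memc|ihc|ihc]
 | H : In (Or ?a ?b) ?D, P : K _ ?n ?G (?a :: ?b :: ?D) |- _ =>
     apply kd_Ror with a b; [memc|ihc]
 | H : In (Imp ?a ?b) ?G, P : K _ ?n ?G (?a :: ?D), P' : K _ ?n (?b :: ?G) ?D |- _ =>
     apply kd_Limp with a b; [memc|ihc|ihc]
 | H : In (Imp ?a ?b) ?D, P : K _ ?n (?a :: ?G) (?b :: ?D) |- _ =>
     apply kd_Rimp with a b; [memc|ihc]
 | HR : ruleCN _, H : In (Cond ?a0 ?b0) _, P : K _ ?n [] [?b0] |- _ =>
     apply kd_CN with a0 b0; [exact HR|memc|eapply K_Kd; eassumption]
 end.

Section Cut3.
Lemma trans0 L a (Ca : cut_for L a) q : Kd L [] [a] -> Kd L [a] [q] -> Kd L [] [q].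
Proof. intros H1 H2. apply Ca; [apply kd_mono with [] [a]| apply kd_mono with [a] [q]]; auto; intros z; simpl; tauto. Qed.
Ltac tr L Ca Cb := match goal with
  | |- Kd _ [] _ => first [solve [eapply (trans0 L _ Cb); eauto using K_Kd] | solve [eapply (trans0 L _ Ca); eauto using K_Kd]]
  | |- _ => first [solve [eapply (trans L _ Ca); eauto using K_Kd] | solve [eapply (trans L _ Cb); eauto using K_Kd]]
  end.

Variable L : logic.
Notation Kd := (Kd L).

Lemma condcut a b (Ca : cut_for L a) (Cb : cut_for L b) n Y E (HK : K L n Y E) :
  forall G0 D0, incl Y (Cond a b :: G0) -> incl E D0 -> CondLeft L a b G0 -> Kd G0 D0.
Proof.
  induction HK; intros G0 D0 HY HE HC; try npc.
  -
    destruct (HY _ H0) as [e|e].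
    + injection e; intros; subst.
      destruct HC as [[_ [x [y [Hin [Q1 [Q2 [Q3 Q4]]]]]]]|[[? _]|[[? _]|[HN Q]]]]; try rulecontra.
      * apply kd_CE with a0 x b0 y; auto; tr L Ca Cb.
      * apply kd_CN with a0 b0; auto; tr L Ca Cb.
    + apply kd_CE with a0 a1 b0 b1; eauto using K_Kd.
  -
    destruct (HY _ H0) as [e|e].
    + injection e; intros; subst.
      destruct HC as [[? _]|[[_ [x [y [Hin [Q1 [Q2 Q3]]]]]]|[[? _]|[HN Q]]]]; try rulecontra.
      * apply kd_CM with a0 x b0 y; auto; tr L Ca Cb.
      * apply kd_CN with a0 b0; auto; tr L Ca Cb.
    + apply kd_CM with a0 a1 b0 b1; eauto using K_Kd.
  -
    destruct (in_dec pf_eq_dec (a,b) ps) as [Hab|Hab].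
    + apply (cmc_princ L a b Ca Cb ps a0 b0 G0 D0); auto; try memc;
        try (intros p Hp; eapply K_Kd; eauto; fail); try (eapply K_Kd; eassumption).
      intros p Hp Hne. destruct (HY _ (H1 p Hp)) as [e|e]; auto.
      destruct p; unfold cnd in e; simpl in e; injection e; intros; subst; congruence.
    + apply kd_CMC with ps a0 b0; auto; try memc;
        try (intros p Hp; eapply K_Kd; eauto; fail); try (eapply K_Kd; eassumption).
      intros p Hp. destruct (HY _ (H1 p Hp)) as [e|e]; auto.
      destruct p; unfold cnd in e; simpl in e; injection e; intros; subst; contradiction.
Qed.
End Cut3.

Section Cut4.
Variable L : logic.
Notation Kd := (Kd L).

Definition Princ A :=
 (forall a b, A = And a b -> forall G D, Kd G (a::D) -> Kd G (b::D) -> Kd (A::G) D -> Kd G D) /\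
 (forall a b, A = Or a b -> forall G D, Kd G (a::b::D) -> Kd (A::G) D -> Kd G D) /\
 (forall a b, A = Imp a b -> forall G D, Kd (a::G) (b::D) -> Kd (A::G) D -> Kd G D) /\
 (forall a b, A = Cond a b -> forall G D, CondLeft L a b G -> Kd (A::G) D -> Kd G D).

Ltac mono HR := eapply kd_mono; [exact HR | sc | sc].

Lemma cut_inner A (PA : Princ A) n G D1 (HK : K L n G D1) :
  forall D, incl D1 (A::D) -> Kd (A::G) D -> Kd G D.
Proof.
  destruct PA as [PAnd [POr [PImp PCond]]].
  induction HK; intros D' HD HR.
  - destruct (HD _ H0) as [e|e].
    + subst. eapply kd_mono; [exact HR| |intros z; auto]. intros z [<-|Hz]; auto.
    + eapply kd_ax; eauto.
  - eapply kd_bot; eauto.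
  - apply kd_Land with a b; [auto|apply IHHK; [sc|mono HR]].
  - assert (R1 : Kd G (a::D')) by (apply IHHK1; [sc|mono HR]).
    assert (R2 : Kd G (b::D')) by (apply IHHK2; [sc|mono HR]).
    destruct (HD _ H) as [e|e]; [eapply PAnd; eauto; rewrite e; auto|apply kd_Rand with a b; auto].
  - apply kd_Lor with a b; [auto|apply IHHK1; [sc|mono HR]|apply IHHK2; [sc|mono HR]].
  - assert (R1 : Kd G (a::b::D')) by (apply IHHK; [sc|mono HR]).
    destruct (HD _ H) as [e|e]; [eapply POr; eauto; rewrite e; auto|apply kd_Ror with a b; auto].
  - apply kd_Limp with a b; [auto|apply IHHK1; [sc|mono HR]|apply IHHK2; [sc|mono HR]].
  - assert (R1 : Kd (a::G) (b::D')) by (apply IHHK; [sc|mono HR]).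
    destruct (HD _ H) as [e|e]; [eapply PImp; eauto; rewrite e; auto|apply kd_Rimp with a b; auto].
  - destruct (HD _ H1) as [e|e].
    + eapply PCond; [exact e| |exact HR]. left; split; auto. exists a1, b1; repeat split; eauto using K_Kd.
    + apply kd_CE with a0 a1 b0 b1; eauto using K_Kd.
  - destruct (HD _ H1) as [e|e].
    + eapply PCond; [exact e| |exact HR]. right; left; split; auto. exists a1, b1; repeat split; eauto using K_Kd.
    + apply kd_CM with a0 a1 b0 b1; eauto using K_Kd.
  - destruct (HD _ H2) as [e|e].
    + eapply PCond; [exact e| |exact HR]. right; right; left; split; auto. exists ps; repeat split; eauto using K_Kd.
    + apply kd_CMC with ps a0 b0; eauto using K_Kd.
  - destruct (HD _ H0) as [e|e].
    + eapply PCond; [exact e| |exact HR]. right; right; right; split; eauto using K_Kd.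
    + apply kd_CN with a0 b0; eauto using K_Kd.
Qed.

Lemma kinv X D Y E : Kd X D -> (forall n, K L n X D -> K L n Y E) -> Kd Y E.
Proof. intros [n H] F; exists n; auto. Qed.

Theorem cut A : forall G D, Kd G (A::D) -> Kd (A::G) D -> Kd G D.
Proof.
  induction A; intros G D [k H1] H2;
  (match goal with H1 : K _ _ _ (?A :: _) |- _ =>
     enough (PA : Princ A) by (eapply (cut_inner _ PA k G _ H1 D); [intros z; simpl; tauto|exact H2]) end);
  unfold Princ; (split; [|split; [|split]]); intros a b e; try discriminate; injection e as e1 e2; subst; intros G' D'.
  - intros P1 P2 P3.
    assert (Q : Kd (a::b::G') D') by (eapply kinv; [exact P3|]; intros m Hm; eapply (inv_Land L m _ _ Hm a b); sc).
    apply IHA1; auto. apply IHA2; [mono P2|mono Q].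
  - intros P1 P3.
    assert (Qa : Kd (a::G') D') by (eapply kinv; [exact P3|]; intros m Hm; eapply (inv_Lor_l L m _ _ Hm a b); sc).
    assert (Qb : Kd (b::G') D') by (eapply kinv; [exact P3|]; intros m Hm; eapply (inv_Lor_r L m _ _ Hm a b); sc).
    apply IHA2; auto. apply IHA1; [mono P1|mono Qa].
  - intros P1 P3.
    assert (Qa : Kd G' (a::D')) by (eapply kinv; [exact P3|]; intros m Hm; eapply (inv_Limp_l L m _ _ Hm a b); sc).
    assert (Qb : Kd (b::G') D') by (eapply kinv; [exact P3|]; intros m Hm; eapply (inv_Limp_r L m _ _ Hm a b); sc).
    apply IHA1; auto. apply IHA2; [mono P1|mono Qb].
  - intros HC [m P3]. eapply (condcut L a b IHA1 IHA2 m _ _ P3); eauto; intros z; auto.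
Qed.
End Cut4.

Fixpoint msr f := match f with And a b | Or a b | Imp a b => S (msr a + msr b) | _ => 0 end.
Fixpoint msrl l := match l with [] => 0 | x :: l => msr x + msrl l end.
Lemma msrl_perm l l' : Permutation l l' -> msrl l = msrl l'.
Proof. induction 1; simpl; lia. Qed.

Lemma split_na l : (forall x, In x l -> msr x = 0) \/ exists x l0, Permutation l (x::l0) /\ msr x > 0.
Proof. induction l as [|y l IH].
  - left; intros x [].
  - destruct (msr y) eqn:E.
    + destruct IH as [IH|[x [l0 [Hp Hx]]]].
      * left; intros x [<-|Hx]; auto.
      * right; exists x, (y::l0); split; auto. eapply perm_trans; [apply perm_skip; exact Hp|apply perm_swap].
    + right; exists y, l; split; auto; lia.
Qed.

Lemma in_perm {A} (x : A) l : In x l -> exists l0, Permutation l (x::l0).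
Proof. intros H; apply in_split in H; destruct H as [l1 [l2 ->]]; exists (l1 ++ l2).
  symmetry; apply Permutation_middle. Qed.

Definition Valid G D := forall v, forallb (eval v) G = true -> existsb (eval v) D = true.

Section PC.
Variable L : logic.

Lemma pc_base G D : (forall x, In x G -> msr x = 0) -> (forall x, In x D -> msr x = 0) -> Valid G D -> Kd L G D.
Proof.
  intros HG HD HV.
    destruct (in_dec form_eq_dec Bot G) as [HB|HB]; [apply kd_bot; auto|].
    set (v := fun x => if in_dec form_eq_dec x G then true else false).
    assert (Hf : forallb (eval v) G = true).
    { apply forallb_forall. intros x Hx. specialize (HG x Hx). destruct x; simpl in HG; try lia.
      - simpl; unfold v; destruct (in_dec form_eq_dec (Atom n) G); auto.
      - contradiction.
      - simpl; unfold v; destruct (in_dec form_eq_dec (Cond x1 x2) G); auto. }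
    specialize (HV v Hf). apply existsb_exists in HV. destruct HV as [x [Hx Ex]].
    specialize (HD x Hx). destruct x; simpl in HD; try lia; simpl in Ex; try discriminate.
    + unfold v in Ex; destruct (in_dec form_eq_dec (Atom n) G); try discriminate. eapply kd_ax; eauto.
    + unfold v in Ex; destruct (in_dec form_eq_dec (Cond x1 x2) G); try discriminate. eapply ident; eauto.
Qed.

Ltac vsolve HV E a b G0 D := intros ?v ?Hv; specialize (HV v); rewrite E in HV; simpl in *;
  destruct (eval v a), (eval v b), (forallb (eval v) G0), (existsb (eval v) D); simpl in *; auto.

Lemma pc_aux m : forall G D, msrl G + msrl D <= m -> Valid G D -> Kd L G D.
Proof.
  induction m as [|m IH]; intros G D Hm HV;
  (destruct (split_na G) as [HG|[x [G0 [HpG HxG]]]];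
   [destruct (split_na D) as [HD|[x [D0 [HpD HxD]]]]|]);
  try (apply pc_base; auto; fail);
  try (rewrite (msrl_perm _ _ HpG) in Hm; simpl in Hm; lia);
  try (rewrite (msrl_perm _ _ HpD) in Hm; simpl in Hm; lia).
  -
    assert (Hx : In x D) by (apply (Permutation_in _ (Permutation_sym HpD)); left; auto).
    assert (E : forall v, existsb (eval v) D = existsb (eval v) (x::D0)) by (intro; apply existsb_perm; auto).
    rewrite (msrl_perm _ _ HpD) in Hm.
    destruct x as [n| |a b|a b|a b|a b]; simpl in HxD; try lia.
    + apply kd_Rand with a b; auto.
      * apply kd_mono with G (a::D0); [apply IH; [simpl in *; lia|] | intros z; auto | intros z [<-|Hz]; [left|right; apply (Permutation_in _ (Permutation_sym HpD)); right]; auto].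
        vsolve HV E a b G D0.
      * apply kd_mono with G (b::D0); [apply IH; [simpl in *; lia|] | intros z; auto | intros z [<-|Hz]; [left|right; apply (Permutation_in _ (Permutation_sym HpD)); right]; auto].
        vsolve HV E a b G D0.
    + apply kd_Ror with a b; auto.
      apply kd_mono with G (a::b::D0); [apply IH; [simpl in *; lia|] | intros z; auto | intros z [<-|[<-|Hz]]; [left|right;left|right; right; apply (Permutation_in _ (Permutation_sym HpD)); right]; auto].
      vsolve HV E a b G D0.
    + apply kd_Rimp with a b; auto.
      apply kd_mono with (a::G) (b::D0); [apply IH; [simpl in *; lia|] | intros z; auto | intros z [<-|Hz]; [left|right; apply (Permutation_in _ (Permutation_sym HpD)); right]; auto].
      vsolve HV E a b G D0.
  -
    assert (Hx : In x G) by (apply (Permutation_in _ (Permutation_sym HpG)); left; auto).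
    assert (E : forall v, forallb (eval v) G = forallb (eval v) (x::G0)) by (intro; apply forallb_perm; auto).
    rewrite (msrl_perm _ _ HpG) in Hm.
    destruct x as [n| |a b|a b|a b|a b]; simpl in HxG; try lia.
    + apply kd_Land with a b; auto.
      apply kd_mono with (a::b::G0) D; [apply IH; [simpl in *; lia|] | intros z [<-|[<-|Hz]]; [left|right;left|right; right; apply (Permutation_in _ (Permutation_sym HpG)); right]; auto | intros z; auto].
      vsolve HV E a b G0 D.
    + apply kd_Lor with a b; auto.
      * apply kd_mono with (a::G0) D; [apply IH; [simpl in *; lia|] | intros z [<-|Hz]; [left|right; apply (Permutation_in _ (Permutation_sym HpG)); right]; auto | intros z; auto].
        vsolve HV E a b G0 D.
      * apply kd_mono with (b::G0) D; [apply IH; [simpl in *; lia|] | intros z [<-|Hz]; [left|right; apply (Permutation_in _ (Permutation_sym HpG)); right]; auto | intros z; auto].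
        vsolve HV E a b G0 D.
    + apply kd_Limp with a b; auto.
      * apply kd_mono with G0 (a::D); [apply IH; [simpl in *; lia|] | intros z Hz; apply (Permutation_in _ (Permutation_sym HpG)); right; auto | intros z; auto].
        vsolve HV E a b G0 D.
      * apply kd_mono with (b::G0) D; [apply IH; [simpl in *; lia|] | intros z [<-|Hz]; [left|right; apply (Permutation_in _ (Permutation_sym HpG)); right]; auto | intros z; auto].
        vsolve HV E a b G0 D.
Qed.

Lemma taut_kd f : taut_instance f -> Kd L [] [f].
Proof. intro H. apply (pc_aux (msrl [] + msrl [f])); auto. intros v _; simpl; rewrite H; auto. Qed.
End PC.

Section Comp.
Variable L : logic.
Notation Kd := (Kd L).

Lemma kd_rimp_inv a b : Kd [] [Imp a b] -> Kd [a] [b].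
Proof. intros H; eapply kinv; [exact H|]; intros m Hm; eapply (inv_Rimp L m _ _ Hm a b); sc. Qed.
Lemma kd_rand_inv a b : Kd [] [And a b] -> Kd [] [a] /\ Kd [] [b].
Proof. intros H; split; (eapply kinv; [exact H|]; intros m Hm);
  [eapply (inv_Rand_l L m _ _ Hm a b)|eapply (inv_Rand_r L m _ _ Hm a b)]; sc. Qed.

Lemma kd_condimp a0 a1 b0 b1 : Kd [a0] [a1] -> Kd [a1] [a0] -> Kd [b0] [b1] -> Kd [b1] [b0] ->
  Kd [Cond a0 b0] [Cond a1 b1].
Proof. intros. destruct L eqn:EL.
  - apply kd_CE with a1 a0 b1 b0; simpl; auto; left; auto.
  - apply kd_CM with a1 a0 b1 b0; simpl; auto; left; auto.
  - apply kd_CE with a1 a0 b1 b0; simpl; auto; right; auto.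
  - apply kd_CM with a1 a0 b1 b0; simpl; auto; right; auto.
  - apply kd_CMC with [(a0,b0)] a1 b1; simpl; auto; [left; auto|congruence|intros p [<-|[]]; auto|intros p [<-|[]]; auto|intros p [<-|[]]; auto].
  - apply kd_CMC with [(a0,b0)] a1 b1; simpl; auto; [right; auto|congruence|intros p [<-|[]]; auto|intros p [<-|[]]; auto|intros p [<-|[]]; auto].
Qed.

Lemma id1 a : Kd [a] [a].
Proof. apply ident with a; simpl; auto. Qed.

Lemma kd_mon a b c : hasCM L -> Kd [b] [c] -> Kd [Cond a b] [Cond a c].
Proof. intros HC H. assert (Ia := id1 a). unfold hasCM in HC. destruct L eqn:EL; try (intuition discriminate).
  - apply kd_CM with a a c b; simpl; auto; unfold ruleCM; auto.
  - apply kd_CM with a a c b; simpl; auto; unfold ruleCM; auto.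
  - apply kd_CMC with [(a,b)] a c; simpl; auto; try (unfold ruleCMC; auto); try congruence; intros p [<-|[]]; auto.
  - apply kd_CMC with [(a,b)] a c; simpl; auto; try (unfold ruleCMC; auto); try congruence; intros p [<-|[]]; auto.
Qed.

Theorem thm_kd phi : Thm L phi -> Kd [] [phi].
Proof.
  induction 1.
  - apply taut_kd; auto.
  - apply kd_rimp_inv in IHThm1. apply (cut L a).
    + eapply kd_mono; [exact IHThm2| |]; intros z; simpl; tauto.
    + exact IHThm1.
  - apply kd_rand_inv in IHThm1, IHThm2. destruct IHThm1 as [P1 P2]; destruct IHThm2 as [P3 P4].
    apply kd_rimp_inv in P1, P2, P3, P4.
    apply kd_Rimp with (Cond a0 b0) (Cond a1 b1); simpl; auto.
    apply kd_mono with [Cond a0 b0] [Cond a1 b1]; [apply kd_condimp; auto|intros z; simpl; tauto|intros z; simpl; tauto].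
  - apply kd_Rimp with (Cond a (And b c)) (And (Cond a b) (Cond a c)); simpl; auto.
    apply kd_Rand with (Cond a b) (Cond a c); simpl; auto.
    + apply kd_mono with [Cond a (And b c)] [Cond a b]; [apply kd_mon; auto|intros z; simpl; tauto|intros z; simpl; tauto].
      apply kd_Land with b c; simpl; auto. apply ident with b; simpl; auto.
    + apply kd_mono with [Cond a (And b c)] [Cond a c]; [apply kd_mon; auto|intros z; simpl; tauto|intros z; simpl; tauto].
      apply kd_Land with b c; simpl; auto. apply ident with c; simpl; auto.
  - apply kd_Rimp with (And (Cond a b) (Cond a c)) (Cond a (And b c)); simpl; auto.
    apply kd_Land with (Cond a b) (Cond a c); simpl; auto.
    assert (HR : ruleCMC L) by (unfold hasCC, ruleCMC in *; auto).
    apply kd_CMC with [(a,b);(a,c)] a (And b c); simpl; auto; [congruence| | | |].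
    + intros p [<-|[<-|[]]]; simpl; auto.
    + intros p [<-|[<-|[]]]; apply id1.
    + intros p [<-|[<-|[]]]; apply id1.
    + apply kd_Rand with b c; simpl; auto; [apply ident with b|apply ident with c]; simpl; auto.
  - apply kd_CN with a Top; simpl; auto.
    apply kd_Rimp with Bot Bot; simpl; auto. apply kd_bot; simpl; auto.
Qed.
End Comp.

Section Tr.
Variable L : logic.

Lemma gd_wl G D E : GD L G D -> GD L (E ++ G) D.
Proof. induction E; simpl; auto. intros; apply g_WL; auto. Qed.
Lemma gd_wr G D E : GD L G D -> GD L G (E ++ D).
Proof. induction E; simpl; auto. intros; apply g_WR; auto. Qed.
Lemma gd_wk G D G' D' E1 E2 : GD L G D -> Permutation G' (G ++ E1) -> Permutation D' (D ++ E2) -> GD L G' D'.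
Proof. intros H P1 P2. apply g_perm with (E1 ++ G) (E2 ++ D); [apply gd_wr, gd_wl; auto| |].
  - rewrite P1; apply Permutation_app_comm.
  - rewrite P2; apply Permutation_app_comm. Qed.

Lemma nodup_perm (l G : list form) : NoDup l -> incl l G -> exists G0, Permutation G (l ++ G0).
Proof. revert G; induction l as [|x l IH]; intros G Hn Hi.
  - exists G; auto.
  - inversion Hn; subst. destruct (in_perm x G) as [G1 HG1]; [apply Hi; left; auto|].
    destruct (IH G1) as [G0 HG0]; auto.
    + intros y Hy. assert (In y (x::G1)) by (apply (Permutation_in _ HG1); apply Hi; right; auto).
      destruct H; auto; subst; contradiction.
    + exists G0. rewrite HG1. simpl. apply perm_skip; auto.
Qed.

Ltac permin HP := let z := fresh in let Hz := fresh in intros z Hz; apply (Permutation_in _ HP) in Hz; simpl in Hz; tauto.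

Lemma trans_gd n : forall G D, K L n G D -> GD L G D.
Proof.
  induction n as [|n IH]; intros G D HK; inversion HK; subst.
  all: try (destruct (in_perm _ _ H) as [G0 HG0]; destruct (in_perm _ _ H0) as [D0 HD0];
            apply gd_wk with (Atom p :: G0) (Atom p :: D0) [] []; [apply g_ax|rewrite app_nil_r; auto..]; fail).
  all: try (destruct (in_perm _ _ H) as [G0 HG0];
            apply gd_wk with (Bot :: G0) D [] []; [apply g_bot|rewrite app_nil_r; auto..]; fail).
  -
    match goal with Hi : In (And ?a ?b) G, Hp : K _ n (?a::?b::G) D |- _ => rename Hi into H; rename Hp into H0 end.
    destruct (in_perm _ _ H) as [G0 HG0].
    apply gd_wk with (And a b :: G0) D [] []; [|rewrite app_nil_r; auto..].
    apply g_Land, IH. eapply (inv_Land L n _ _ H0 a b); [|intros z; auto|simpl; auto..].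
    intros z [<-|[<-|Hz]]; [right; left; auto|right; right; left; auto|].
    apply (Permutation_in _ HG0) in Hz; destruct Hz; auto; right; right; right; auto.
  -
    match goal with Hi : In (And ?a ?b) D, Hp : K _ n G (?a::D), Hq : K _ n G (?b::D) |- _ => rename Hi into H; rename Hp into H0; rename Hq into H1 end.
    destruct (in_perm _ _ H) as [D0 HD0].
    apply gd_wk with G (And a b :: D0) [] []; [|rewrite app_nil_r; auto..].
    apply g_Rand; apply IH.
    + eapply (inv_Rand_l L n _ _ H0 a b); [intros z; auto| |simpl; auto].
      intros z [<-|Hz]; [right; left; auto|]. apply (Permutation_in _ HD0) in Hz; destruct Hz; auto; right; right; auto.
    + eapply (inv_Rand_r L n _ _ H1 a b); [intros z; auto| |simpl; auto].
      intros z [<-|Hz]; [right; left; auto|]. apply (Permutation_in _ HD0) in Hz; destruct Hz; auto; right; right; auto.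
  -
    match goal with Hi : In (Or ?a ?b) G, Hp : K _ n (?a::G) D, Hq : K _ n (?b::G) D |- _ => rename Hi into H; rename Hp into H0; rename Hq into H1 end.
    destruct (in_perm _ _ H) as [G0 HG0].
    apply gd_wk with (Or a b :: G0) D [] []; [|rewrite app_nil_r; auto..].
    apply g_Lor; apply IH.
    + eapply (inv_Lor_l L n _ _ H0 a b); [|intros z; auto|simpl; auto].
      intros z [<-|Hz]; [right; left; auto|]. apply (Permutation_in _ HG0) in Hz; destruct Hz; auto; right; right; auto.
    + eapply (inv_Lor_r L n _ _ H1 a b); [|intros z; auto|simpl; auto].
      intros z [<-|Hz]; [right; left; auto|]. apply (Permutation_in _ HG0) in Hz; destruct Hz; auto; right; right; auto.
  -
    match goal with Hi : In (Or ?a ?b) D, Hp : K _ n G (?a::?b::D) |- _ => rename Hi into H; rename Hp into H0 end.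
    destruct (in_perm _ _ H) as [D0 HD0].
    apply gd_wk with G (Or a b :: D0) [] []; [|rewrite app_nil_r; auto..].
    apply g_Ror, IH. eapply (inv_Ror L n _ _ H0 a b); [intros z; auto| |simpl; auto..].
    intros z [<-|[<-|Hz]]; [right; left; auto|right; right; left; auto|].
    apply (Permutation_in _ HD0) in Hz; destruct Hz; auto; right; right; right; auto.
  -
    match goal with Hi : In (Imp ?a ?b) G, Hp : K _ n G (?a::D), Hq : K _ n (?b::G) D |- _ => rename Hi into H; rename Hp into H0; rename Hq into H1 end.
    destruct (in_perm _ _ H) as [G0 HG0].
    apply gd_wk with (Imp a b :: G0) D [] []; [|rewrite app_nil_r; auto..].
    apply g_Limp; apply IH.
    + eapply (inv_Limp_l L n _ _ H0 a b); [|intros z; auto|simpl; auto].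
      intros z Hz. apply (Permutation_in _ HG0) in Hz; destruct Hz; auto.
    + eapply (inv_Limp_r L n _ _ H1 a b); [|intros z; auto|simpl; auto].
      intros z [<-|Hz]; [right; left; auto|]. apply (Permutation_in _ HG0) in Hz; destruct Hz; auto; right; right; auto.
  -
    match goal with Hi : In (Imp ?a ?b) D, Hp : K _ n (?a::G) (?b::D) |- _ => rename Hi into H; rename Hp into H0 end.
    destruct (in_perm _ _ H) as [D0 HD0].
    apply gd_wk with G (Imp a b :: D0) [] []; [|rewrite app_nil_r; auto..].
    apply g_Rimp, IH. eapply (inv_Rimp L n _ _ H0 a b); [intros z; auto| |simpl; auto..].
    intros z [<-|Hz]; [right; left; auto|]. apply (Permutation_in _ HD0) in Hz; destruct Hz; auto; right; right; auto.
  -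
    destruct (in_perm _ _ H1) as [G0 HG0]; destruct (in_perm _ _ H2) as [D0 HD0].
    apply gd_wk with [Cond a1 b1] [Cond a0 b0] G0 D0; auto. apply g_CE; auto.
  -
    destruct (in_perm _ _ H1) as [G0 HG0]; destruct (in_perm _ _ H2) as [D0 HD0].
    apply gd_wk with [Cond a1 b1] [Cond a0 b0] G0 D0; auto. apply g_CM; auto.
  -
    set (ps' := nodup pf_eq_dec ps).
    assert (Hps : forall p, In p ps' <-> In p ps) by (intro; apply nodup_In).
    assert (Hnd : NoDup (map cnd ps')).
    { apply FinFun.Injective_map_NoDup; [|apply NoDup_nodup].
      intros [x1 x2] [y1 y2]; unfold cnd; simpl; intro e; injection e; intros; subst; auto. }
    destruct (nodup_perm (map cnd ps') G Hnd) as [G0 HG0].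
    { intros z Hz; apply in_map_iff in Hz; destruct Hz as [p [<- Hp]]; apply H2, Hps; auto. }
    destruct (in_perm _ _ H3) as [D0 HD0].
    apply gd_wk with (map cnd ps') [Cond a0 b0] G0 D0; auto.
    apply (g_CMC L ps' a0 b0); auto.
    + destruct ps as [|p ps0]; [congruence|]. intro e. assert (Hp' : In p ps') by (apply Hps; left; auto).
      rewrite e in Hp'; destruct Hp'.
    + intros p Hp; apply IH, H4, Hps; auto.
    + intros p Hp; apply IH, H5, Hps; auto.
    + apply IH. eapply K_mono; [exact H6| |intros z; auto].
      intros z Hz; apply in_map_iff in Hz; destruct Hz as [p [<- Hp]]; apply in_map, Hps; auto.
  -
    destruct (in_perm _ _ H1) as [D0 HD0].
    apply gd_wk with [] [Cond a0 b0] G D0; auto. apply g_CN; auto.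
Qed.
End Tr.

Theorem mainTheorem3 : forall (L : logic) (phi : form),
  GD L [] [phi] <-> Thm L phi.
Proof.
  intros L phi; split.
  - apply soundness.
  - intro H. destruct (thm_kd L phi H) as [n Hn]. apply (trans_gd L n); auto.
Qed.
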